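(* Let $X>0$ and let $w:[0,X]\to\mathbb{R}$ be a smooth function with $w''(x)\ge w(x)$ and $w(x)\ge0$ for all $x\in[0,X]$, and $w'(0)\ge0$. Then for all $x,y\ge0$ with $x+y\le X$, $w(x+y)\ge w(x)\cosh(y)$. *)

(* Defs.v *)
From Stdlib Require Import Reals.
From Coquelicot Require Import Coquelicot.
Open Scope R_scope.

Definition smooth (w : R -> R) : Prop := forall (n : nat) (x : R), ex_derive_n w n x.

(* Main.v *)
Require Import Defs.
From Stdlib Require Import Reals Lra.
From Coquelicot Require Import Coquelicot.
Open Scope R_scope.

Lemma mono_aux (f df : R -> R) (a b : R) :
  a <= b ->
  (forall t, is_derive f t (df t)) ->
  (forall t, a <= t <= b -> df t >= 0) -> f a <= f b.
Proof.
  intros Hab Hd Hp.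
  destruct (MVT_gen f a b df) as [c [Hc He]].
  - intros; apply Hd.
  - intros t _. apply continuity_pt_filterlim.
    apply (ex_derive_continuous f). eexists; apply Hd.
  - rewrite Rmin_left in Hc by lra. rewrite Rmax_right in Hc by lra.
    specialize (Hp c Hc). nra.
Qed.

Theorem lemma5p3 (X : R) (w : R -> R) :
  0 < X ->
  smooth w ->
  (forall x, 0 <= x <= X -> Derive_n w 2 x >= w x) ->
  (forall x, 0 <= x <= X -> w x >= 0) ->
  Derive w 0 >= 0 ->
  forall x y, 0 <= x -> 0 <= y -> x + y <= X -> w (x + y) >= w x * cosh y.
Proof.
  intros HX Hs H2 H0 Hd0 x y Hx Hy Hxy.
  set (w1 := Derive w). set (w2 := Derive_n w 2).
  assert (D1 : forall t, is_derive w t (w1 t)).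
  { intro t. apply Derive_correct. exact (Hs 1%nat t). }
  assert (D2 : forall t, is_derive w1 t (w2 t)).
  { intro t. apply Derive_correct. exact (Hs 2%nat t). }
  assert (W1 : forall t, 0 <= t <= X -> w1 t >= 0).
  { intros t Ht. assert (w1 0 <= w1 t); [|unfold w1 in *; lra].
    apply (mono_aux w1 w2); [lra|exact D2|].
    intros u Hu. specialize (H2 u ltac:(lra)). specialize (H0 u ltac:(lra)).
    unfold w2; lra. }
  set (c := w x).
  assert (P : forall s, x <= s <= X -> w1 s + w s >= c * exp (s - x)).
  { intros s Hs'.
    assert (Hm : exp (-x) * (w1 x + w x) - c * exp (-x) <=
                 exp (-s) * (w1 s + w s) - c * exp (-x)).
    { apply (mono_aux (fun s => exp (-s) * (w1 s + w s) - c * exp (-x))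
         (fun s => exp (-s) * (w2 s - w s))); [lra| |].
      - intro t. auto_derive.
        + split; [eexists; apply D2|split; [eexists; apply D1|easy]].
        + replace (Derive (fun x0 : R => w1 x0) t) with (w2 t)
            by (symmetry; apply is_derive_unique; apply D2).
          replace (Derive (fun x0 : R => w x0) t) with (w1 t)
            by (symmetry; apply is_derive_unique; apply D1). ring.
      - intros t Ht. specialize (H2 t ltac:(lra)).
        assert (0 < exp (-t)) by apply exp_pos. unfold w2 in *; nra. }
    assert (Hx1 := W1 x ltac:(lra)).
    assert (E : exp (s - x) = exp s * exp (-x)) by (rewrite <- exp_plus; f_equal; ring).
    assert (E2 : exp (-s) * exp s = 1) by (rewrite <- exp_plus, <- exp_0; f_equal; ring).
    assert (0 < exp (-x)) by apply exp_pos.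
    assert (0 < exp s) by apply exp_pos.
    unfold c in *. rewrite E.
    assert (exp (-x) * w1 x >= 0) by nra.
    assert (exp (-s) * (w1 s + w s) >= exp (-s) * exp s * (w x * exp (-x))).
    { rewrite E2. nra. }
    assert (0 < exp (-s)) by apply exp_pos.
    nra. }
  assert (Q : exp x * w x - c * (exp (2*x - x) + exp x) / 2 <=
              exp (x+y) * w (x+y) - c * (exp (2*(x+y) - x) + exp x) / 2).
  { apply (mono_aux (fun s => exp s * w s - c * (exp (2*s - x) + exp x) / 2)
       (fun s => exp s * (w1 s + w s - c * exp (s - x)))); [lra| |].
    - intro t. auto_derive.
      + exact (Hs 1%nat t).
      + replace (Derive (fun x0 : R => w x0) t) with (w1 t)
            by (symmetry; apply is_derive_unique; apply D1).
        replace (exp (2 * t + - x)) with (exp t * exp (t - x))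
          by (rewrite <- exp_plus; f_equal; ring). fold w1. field.
    - intros t Ht. specialize (P t ltac:(lra)). assert (0 < exp t) by apply exp_pos. nra. }
  replace (2 * x - x) with x in Q by ring.
  assert (E1 : exp (2 * (x + y) - x) = exp (x + y) * exp y)
    by (rewrite <- exp_plus; f_equal; ring).
  assert (E2 : exp x = exp (x + y) * exp (- y))
    by (rewrite <- exp_plus; f_equal; ring).
  rewrite E1 in Q. rewrite E2 in Q at 3. unfold cosh. fold c.
  assert (0 < exp (x + y)) by apply exp_pos.
  assert (c * exp x = exp x * w x) by (unfold c; ring).
  assert (exp (x+y) * (w (x+y) - c * ((exp y + exp (- y)) / 2)) >= 0) by nra.
  apply Rle_ge. apply Rminus_ge in H3 || idtac. nra.
Qed.
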